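(* Let $G$ be a topological group with identity $e$ and $\kappa$ a cardinal. If $A$ is a precompact subset of $G$ and $\mathcal{N}_e^G$ has calibre $(\kappa^+,\omega)$, then $w(A)\le\kappa$.
   Context: $\mathcal{N}_e^G$ is the family of open neighborhoods of $e$ ordered by reverse inclusion. A subset $A$ of $G$ is precompact if it is totally bounded with respect to the (left) group uniformity, i.e. for every neighborhood $U$ of $e$ there is finite $F\subseteq A$ with $A\subseteq FU$. A directed set $P$ has calibre $(\mu,\lambda)$ if every subset of $P$ of size $\mu$ contains a subset of size $\lambda$ with an upper bound in $P$. $w(A)$ is the weight (least size of a base) of $A$. *)

(* Defs.v *)
From HB Require Import structures.
From mathcomp Require Import all_boot all_order all_algebra.
From mathcomp Require Import all_classical all_reals all_analysis.
Set Implicit Arguments. Unset Strict Implicit. Unset Printing Implicit Defensive.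
Local Open Scope classical_set_scope.
Local Open Scope card_scope.

Definition is_topological_group (T : topologicalType)
    (mul : T -> T -> T) (inv : T -> T) (e : T) : Prop :=
  [/\ (forall x y z, mul x (mul y z) = mul (mul x y) z),
      (forall x, mul e x = x /\ mul x e = x),
      (forall x, mul (inv x) x = e /\ mul x (inv x) = e),
      continuous (fun p : T * T => mul p.1 p.2) &
      continuous inv].

Definition open_nbhds_of (T : topologicalType) (e : T) : set (set T) :=
  [set U | open U /\ U e].

(* Precompact (totally bounded for the left uniformity):
   for every neighbourhood U of e there is a finite F ⊆ A with A ⊆ F U. *)
Definition left_precompact (T : topologicalType) (mul : T -> T -> T) (e : T)
    (A : set T) : Prop :=
  forall U, nbhs e U ->
    exists F : set T, [/\ finite_set F, F `<=` A &
      A `<=` [set mul f u | f in F & u in U]].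

(* |S| = κ^+ where κ = |K| : S is of cardinality > κ and every subset of S
   of cardinality > κ has the cardinality of S (i.e. |S| is the least
   cardinal above κ). *)
Definition card_succ_size (K : Type) (T : Type) (S : set T) : Prop :=
  ~ (S #<= [set: K]) /\
  forall S', S' `<=` S -> ~ (S' #<= [set: K]) -> S #<= S'.

(* Calibre (κ^+, ω) of the directed set (N_e, ⊇): every subfamily of size κ^+
   contains a subfamily of size ω with an upper bound (a common lower set
   in N_e w.r.t. inclusion). *)
Definition nbhd_calibre_succ_omega (T : topologicalType) (e : T) (K : Type)
    : Prop :=
  forall S : set (set T), S `<=` open_nbhds_of e -> card_succ_size K S ->
    exists2 S' : set (set T), S' `<=` S /\ S' #= [set: nat] &
      exists2 W, open_nbhds_of e W & forall U, S' U -> W `<=` U.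

Definition subspace_base (T : topologicalType) (A : set T)
    (B : set (set T)) : Prop :=
  (forall b, B b -> exists2 U, open U & b = A `&` U) /\
  (forall U x, open U -> A x -> U x -> exists2 b, B b & b x /\ b `<=` U).

Definition weight_le (T : topologicalType) (A : set T) (K : Type) : Prop :=
  exists2 B : set (set T), subspace_base A B & B #<= [set: K].

(* Main.v *)
Require Import Defs.
From mathcomp Require Import all_boot all_order all_algebra.
From mathcomp Require Import all_classical all_reals all_analysis.
From mathcomp Require Import wochoice.
Set Implicit Arguments. Unset Strict Implicit. Unset Printing Implicit Defensive.
Local Open Scope classical_set_scope.
Local Open Scope card_scope.

Lemma wf_rec (I X : Type) (R : I -> I -> Prop) (wf : well_founded R) (x0 : X)
  (F : I -> (I -> X) -> X) :
  (forall i h1 h2, (forall j, R j i -> h1 j = h2 j) -> F i h1 = F i h2) ->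
  exists g : I -> X, forall i, g i = F i g.
Proof.
move=> Fext.
pose F' := fun i (h : forall j, R j i -> X) =>
  F i (fun j => match pselect (R j i) with left p => h j p | right _ => x0 end).
exists (Fix wf (fun _ => X) F') => i.
rewrite Fix_eq /F'.
  apply: Fext => j Rji; case: pselect => // -[]; exact: Rji.
move=> x f g fg; congr (F x _); apply: funext => j.
by case: pselect.
Qed.

Lemma exists_wo (X : eqType) : exists lt : X -> X -> Prop,
  well_founded lt /\ (forall x y, x <> y -> lt x y \/ lt y x).
Proof.
have [R Rwo] := well_ordering_principle X.
have Rch : wo_chain R predT by move=> A _; exact: Rwo.
have Rtot := wo_chainW Rch.
have Ranti := wo_chain_antisymmetric Rch.
exists (fun x y => R x y /\ x <> y); split.
  move=> a; apply: contrapT => Na.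
  have [|z [[zA lbz] _]] := Rwo [pred x | `[< ~ Acc (fun x y => R x y /\ x <> y) x >]].
    exists a; rewrite inE /=.
exact: Na.
  move: zA; rewrite inE /= => zA. apply: zA; constructor => y [Ryz yz].
  apply: contrapT => Ny; apply: yz; apply: Ranti => //.
  by rewrite Ryz /= lbz // inE /=.
move=> x y xy; have := Rtot x y isT isT; case/orP => H; [left|right]; split => //.
by move=> yx; apply: xy.
Qed.

Lemma card_le_inj T U (A : set T) (B : set U) (f : T -> U) :
  (forall x, A x -> B (f x)) -> (forall x y, A x -> A y -> f x = f y -> x = y) ->
  A #<= B.
Proof.
move=> fAB finj.
have [g] : $|{injfun A >-> B}|.
  by apply/injfunPex; exists f => // x y /set_mem Ax /set_mem Ay; exact: finj.
exact: inj_card_le.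
Qed.

Lemma wf_min (X : Type) (lt : X -> X -> Prop) : well_founded lt ->
  forall P : set X, (exists x, P x) -> exists2 x, P x & forall y, P y -> ~ lt y x.
Proof.
move=> wf P [x Px]; apply: contrapT => N.
suff : forall a, ~ P a by move/(_ x).
move=> a; elim: (wf a) => {}a _ IH Pa; apply: N; exists a => // y Py lya.
exact: (IH y lya Py).
Qed.

Lemma nonempty_of_not_le (T K : Type) (S : set T) : ~ (S #<= [set: K]) -> exists x, S x.
Proof.
move=> N; apply: contrapT => E; apply: N.
have -> : S = set0 by apply/seteqP; split => // x Sx; apply: E; exists x.
exact: card_ge0.
Qed.

Lemma succ_of_segments (X : choiceType) (K : Type) (lt : X -> X -> Prop)
  (wf : well_founded lt) (tot : forall x y, x <> y -> lt x y \/ lt y x)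
  (S0 : set X) :
  ~ (S0 #<= [set: K]) ->
  (forall U, S0 U -> [set V | S0 V /\ lt V U] #<= [set: K]) ->
  card_succ_size K S0.
Proof.
move=> NS0 seg; split => // S' S'S0 NS'.
have [s0 _] := nonempty_of_not_le NS'.
pose F := fun (U : X) (h : X -> X) =>
  xget s0 [set V | S' V /\ ~ (exists U', [/\ S0 U', lt U' U & h U' = V])].
have [g gE] : exists g : X -> X, forall i, g i = F i g.
  apply: (wf_rec wf s0) => i h1 h2 h12; rewrite /F; congr xget.
  apply: funext => V; apply: propext; split => -[SV NV]; split => //;
    move=> [U' [A1 A2 A3]]; apply: NV; exists U'; split => //.
    by rewrite h12.
  by rewrite -h12.
have gP : forall U, S0 U -> S' (g U) /\ ~ (exists U', [/\ S0 U', lt U' U & g U' = g U]).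
  move=> U S0U.
  suff : [set V | S' V /\ ~ (exists U', [/\ S0 U', lt U' U & g U' = V])] (F U g).
    by rewrite -gE.
  apply: xgetPex; apply: contrapT => N; apply: NS'.
  apply: (@card_le_trans _ _ _ (g @` [set V | S0 V /\ lt V U])); last first.
    exact: card_le_trans (card_image_le _ _) (seg U S0U).
  apply: subset_card_le => V S'V; apply: contrapT => NV; apply: N; exists V; split => //.
  move=> [U' [A1 A2 A3]]; apply: NV; exists U' => //.
apply: (@card_le_inj _ _ _ _ g) => [x /gP[] //|x y Sx Sy gxy].
apply: contrapT => xy; have [lxy|lyx] := tot _ _ xy.
  by have [_] := gP y Sy; apply; exists x; split.
by have [_] := gP x Sx; apply; exists y; split.
Qed.

Lemma succ_sub (X : choiceType) (K : Type) (Y : set X) :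
  ~ (Y #<= [set: K]) -> exists2 S0, S0 `<=` Y & card_succ_size K S0.
Proof.
move=> NY; have [lt [wf tot]] := exists_wo X.
pose P := [set U | Y U /\ ~ ([set V | Y V /\ lt V U] #<= [set: K])].
have [[U0 PU0]|NP] := pselect (exists U, P U).
  have [Us [YUs NUs] minUs] := wf_min wf (ex_intro _ U0 PU0).
  exists [set V | Y V /\ lt V Us]; first by move=> V [].
  apply: (succ_of_segments wf tot) => // U [YU lUUs].
  apply: (@card_le_trans _ _ _ [set V | Y V /\ lt V U]).
    by apply: subset_card_le => V [[]].
  by apply: contrapT => N; exact: (minUs U).
exists Y => //; apply: (succ_of_segments wf tot) => // U YU.
by apply: contrapT => N; apply: NP; exists U.
Qed.

Lemma card_le_fun T U (A : set T) (B : set U) (u0 : U) : A #<= B ->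
  exists f : T -> U, (forall x, A x -> B (f x)) /\
    (forall x y, A x -> A y -> f x = f y -> x = y).
Proof.
move/card_leP => [g].
exists (fun x => match pselect (x \in A) with
  left p => val (g (exist _ x p)) | right _ => u0 end); split.
  move=> x Ax; case: pselect => [p|]; last by rewrite in_setE.
  exact: (set_mem (valP (g (exist _ x p)))).
move=> x y Ax Ay; case: pselect => [p|]; last by rewrite in_setE.
case: pselect => [q|]; last by rewrite in_setE.
move=> /val_inj E. have := injT E. move=> [] //. Qed.

Lemma inf_prod (K : Type) : ~ finite_set [set: K] -> [set: K * nat] #<= [set: K].
Proof.
move=> infK.
have [k0 _] := infinite_setN0 infK.
pose P := [set D : set (set K) | (forall d, D d -> d #= [set: nat]) /\
  (forall d1 d2, D d1 -> D d2 -> d1 <> d2 -> d1 `&` d2 = set0)].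
have [D [[Dnat Ddisj] maxD]] : exists A, P A /\ forall B, A `<` B -> ~ P B.
  apply: Zorn_bigcup => F FP Ftot; split.
    by move=> d [X FX Xd]; exact: (FP X FX).1 Xd.
  move=> d1 d2 [X1 FX1 X1d] [X2 FX2 X2d].
  have [X12|X21] := Ftot _ _ FX1 FX2.
    exact: (FP X2 FX2).2 (X12 _ X1d) X2d.
  exact: (FP X1 FX1).2 X1d (X21 _ X2d).
pose R := ~` \bigcup_(d in D) d.
have finR : finite_set R.
  apply: contrapT => /infiniteP /(card_le_fun k0) [phi [phiR phiinj]].
  pose r := range phi.
  have rR : r `<=` R by move=> _ [n _ <-]; exact: phiR.
  apply: (maxD (D `|` [set r])); last split.
  - split; first by move=> d Dd; left.
    move=> /(_ r (or_intror erefl)) Dr.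
    have r0 : r (phi 0%N) by exists 0%N.
    by apply: (rR _ r0); exists r.
  - move=> d [Dd|->]; first exact: Dnat.
    exact: inj_card_eq (fun x y _ _ => phiinj x y I I).
  - have rd : forall d, D d -> r `&` d = set0.
      move=> d Dd; apply/seteqP; split => // x [rx dx].
      by apply: (rR x rx); exists d.
    move=> d1 d2 [D1|->] [D2|->] d12 //.
      exact: Ddisj.
    by rewrite setIC; exact: rd.
    exact: rd.
have [d0 Dd0] : exists d, D d.
  apply: contrapT => ND; apply: infK.
  suff -> : [set: K] = R by [].
  by apply/seteqP; split => // x _ [d Dd _]; apply: ND; exists d.
have [m Rm] := finR.
have [idx [idxR idxinj]] := card_le_fun 0%N (proj1 (proj1 (card_eqPle _ _) Rm)).
pose Q := fun d (e : (K -> nat) * (nat -> K)) => D d ->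
   (forall x y, d x -> d y -> e.1 x = e.1 y -> x = y) /\
   (forall n, d (e.2 n)) /\ (forall n k, e.2 n = e.2 k -> n = k).
have [en enP] : {f : set K -> (K -> nat) * (nat -> K) & forall x, Q x (f x)}.
  apply: choice => d; have [Dd|NDd] := pselect (D d); last first.
    by exists (fun _ => 0%N, fun _ => k0).
  have [le1 le2] := proj1 (card_eqPle _ _) (Dnat d Dd).
  have [f1 [_ f1inj]] := card_le_fun 0%N le1.
  have [f2 [f2d f2inj]] := card_le_fun k0 le2.
  exists (f1, f2) => _; split => //; split => [n|n k]; first exact: f2d.
  exact: f2inj.
have [ds dsP] : {f : K -> set K & forall x, (\bigcup_(d in D) d) x -> D (f x) /\ f x x}.
  apply: (@choice _ _ (fun x dd => (\bigcup_(d in D) d) x -> D dd /\ dd x)) => x; have [[d Dd dx]|N] := pselect ((\bigcup_(d in D) d) x).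
    by exists d.
  by exists d0.
pose iota := fun x => if pselect ((\bigcup_(d in D) d) x) is left _ then
   (ds x, if ds x == d0 then ((en (ds x)).1 x + m)%N else (en (ds x)).1 x)
   else (d0, idx x).
have iotaD : forall x, D (iota x).1.
  by move=> x; rewrite /iota; case: pselect => [/dsP[]|].
have iotainj : forall x y, iota x = iota y -> x = y.
  move=> x y; rewrite /iota.
  case: pselect => [Ux|Nx]; case: pselect => [Uy|Ny] /=.
  - move=> [dsE]; have [Dx xx] := dsP x Ux; have [Dy yy] := dsP y Uy.
    rewrite -dsE in yy *; have [inj1 _] := enP _ Dx.
    case: eqP => _ E; apply: inj1 => //.
    by apply/eqP; rewrite -(eqn_add2r m) E.
  - move=> [dsE]; rewrite dsE eqxx => E.
    have : (idx y < m)%N by have := idxR y Ny.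
    by rewrite -E ltnNge leq_addl.
  - move=> [dsE]; rewrite -dsE eqxx => E.
    have : (idx x < m)%N by have := idxR x Nx.
    by rewrite E ltnNge leq_addl.
  - by move=> [E]; exact: idxinj Nx Ny E.
apply: (@card_le_inj _ _ _ _ (fun p => (en (iota p.1).1).2 (pickle ((iota p.1).2, p.2)))) => //.
move=> [x k] [y l] _ _ /= E.
have Dx := iotaD x; have Dy := iotaD y.
have [_ [inx _]] := enP _ Dx; have [_ [iny _]] := enP _ Dy.
have dE : (iota x).1 = (iota y).1.
  apply: contrapT => dne; have := Ddisj _ _ Dx Dy dne.
  move=> /seteqP[/(_ ((en (iota x).1).2 (pickle ((iota x).2, k))))] + _.
  by apply; split => //; rewrite E.
move: E; rewrite dE => /(proj2 (proj2 (enP _ Dy))) /(pcan_inj pickleK) [E2 ->].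
by rewrite (iotainj x y) //; apply: injective_projections.
Qed.


Lemma grp_inv_uniq (T : topologicalType) (mul : T -> T -> T) inv e :
  is_topological_group mul inv e -> forall a b, mul a b = e -> inv a = b.
Proof.
move=> [A I V _ _] a b ab.
by rewrite -[inv a](proj2 (I _)) -ab A (proj1 (V _)) (proj1 (I _)).
Qed.

Lemma grp_invK (T : topologicalType) (mul : T -> T -> T) inv e :
  is_topological_group mul inv e -> forall a b, mul (inv a) (mul a b) = b.
Proof. by move=> [A I V _ _] a b; rewrite A (proj1 (V _)) (proj1 (I _)). Qed.

Lemma grp_inv_mul (T : topologicalType) (mul : T -> T -> T) inv e :
  is_topological_group mul inv e -> forall a b, inv (mul a b) = mul (inv b) (inv a).
Proof.
move=> G a b; apply: (grp_inv_uniq G); case: G => [A I V _ _].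
by rewrite -A (A b) (proj2 (V _)) (proj1 (I _)) (proj2 (V _)).
Qed.

Lemma grp_inv_e (T : topologicalType) (mul : T -> T -> T) inv e :
  is_topological_group mul inv e -> inv e = e.
Proof. by move=> G; apply: (grp_inv_uniq G); case: G => [_ I _ _ _]; rewrite (proj1 (I _)). Qed.

Lemma grp_invmulK (T : topologicalType) (mul : T -> T -> T) inv e :
  is_topological_group mul inv e -> forall p a b,
  mul (inv (mul p a)) (mul p b) = mul (inv a) b.
Proof.
move=> G p a b; rewrite (grp_inv_mul G); have [A _ _ _ _] := G.
by rewrite -A (grp_invK G).
Qed.

Lemma grp_mul_nbhs (T : topologicalType) (mul : T -> T -> T) inv e :
  is_topological_group mul inv e -> forall W, nbhs e W ->
  exists U, nbhs e U /\ forall a b, U a -> U b -> W (mul a b).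
Proof.
move=> [_ I _ Cm _] W We.
have : nbhs (mul (e, e).1 (e, e).2) W by rewrite /= (proj1 (I e)).
move=> /(Cm (e, e)) [[Q R] /= [Qe Re] sub].
exists (Q `&` R); split; first exact: filterI.
by move=> a b [Qa _] [_ Rb]; exact: (sub (a, b)).
Qed.

Lemma grp_inv_nbhs (T : topologicalType) (mul : T -> T -> T) inv e :
  is_topological_group mul inv e -> forall W, nbhs e W ->
  nbhs e [set a | W (inv a)].
Proof.
move=> G W We; have [_ _ _ _ Ci] := G.
have : nbhs (inv e) W by rewrite (grp_inv_e G).
by move=> /(Ci e).
Qed.

Lemma grp_ltrans_cont (T : topologicalType) (mul : T -> T -> T) inv e :
  is_topological_group mul inv e -> forall x, continuous (mul x).
Proof.
move=> [_ _ _ Cm _] x z W.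
move=> /(Cm (x, z)) [[Q R] /= [Qx Rz] sub].
suff : nbhs z [set u | W (mul x u)] by [].
apply: filterS Rz => u Ru; apply: (sub (x, u)); split => //; exact: nbhs_singleton Qx.
Qed.

Lemma grp_ltrans_open (T : topologicalType) (mul : T -> T -> T) inv e :
  is_topological_group mul inv e -> forall x O, open O -> open [set z | O (mul x z)].
Proof.
move=> G x O oO; apply: (open_comp (f := mul x)) => // z _.
exact: (grp_ltrans_cont G).
Qed.

Lemma grp_coset_open (T : topologicalType) (mul : T -> T -> T) inv e :
  is_topological_group mul inv e -> forall f V, open V -> open (mul f @` V).
Proof.
move=> G f V oV.
have -> : mul f @` V = [set z | V (mul (inv f) z)].
  apply/seteqP; split => [_ [v Vv <-]|z Vz] /=; first by rewrite (grp_invK G).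
  exists (mul (inv f) z) => //; have [A Id I _ _] := G.
  by rewrite A (proj2 (I _)) (proj1 (Id _)).
exact: (grp_ltrans_open G (inv f) oV).
Qed.

Definition Phi (T : Type) (mul : T -> T -> T) (inv : T -> T) (U : set T) : set T :=
  [set z | exists a b c d, [/\ U a, U b, U c, U d & z = mul (mul a (mul (inv b) c)) d]].
Definition pairV (T : Type) (mul : T -> T -> T) (A V : set T) (x y : T) :=
  exists f v1 v2, [/\ A f, V v1, V v2, x = mul f v1 & y = mul f v2].
Definition delta (T : Type) (mul : T -> T -> T) (inv : T -> T) (A V : set T) : set T :=
  [set z | exists x y, [/\ A x, A y, pairV mul A V x y & z = mul (inv x) y]].

Lemma delta_Phi (T : topologicalType) (mul : T -> T -> T) inv e :
  is_topological_group mul inv e -> forall A U, U e -> delta mul inv A U `<=` Phi mul inv U.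
Proof.
move=> G A U Ue _ [x [y [Ax Ay [f [v1 [v2 [Af V1 V2 -> ->]]]] ->]]].
exists e, v1, v2, e; split => //.
have [_ Id _ _ _] := G.
by rewrite (grp_invmulK G) (proj1 (Id _)) (proj2 (Id _)).
Qed.

Lemma grp_invmul_nbhs (T : topologicalType) (mul : T -> T -> T) inv e :
  is_topological_group mul inv e -> forall W, nbhs e W ->
  exists W', nbhs e W' /\ forall a b, W' a -> W' b -> W (mul (inv a) b).
Proof.
move=> G W We; have [U [Ue UW]] := grp_mul_nbhs G We.
exists (U `&` [set a | U (inv a)]); split.
  by apply: filterI => //; exact: (grp_inv_nbhs G).
by move=> a b [_ Uia] [Ub _]; exact: UW.
Qed.

Lemma grp_Phi_nbhs (T : topologicalType) (mul : T -> T -> T) inv e :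
  is_topological_group mul inv e -> forall W, nbhs e W ->
  exists U, open_nbhds_of e U /\ Phi mul inv U `<=` W.
Proof.
move=> G W We.
have [U1 [U1e U1W]] := grp_mul_nbhs G We.
have [U2 [U2e U2U1]] := grp_mul_nbhs G U1e.
have [U3 [U3e U3U2]] := grp_invmul_nbhs G U2e.
pose U5 := U1 `&` U2 `&` U3 `&` U3.
have U5e : nbhs e U5 by do 3 apply: filterI => //.
exists U5°; split.
  split; first exact: open_interior.
  exact: nbhs_singleton (nbhs_interior U5e).
move=> _ [a [b [c [d [/interior_subset [[[_ Ua] _] _] /interior_subset [[[_ _] Ub] _]
   /interior_subset [[[_ _] Uc] _] /interior_subset [[[Ud _] _] _] ->]]]]].
by apply: U1W => //; apply: U2U1 => //; exact: U3U2.
Qed.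

Lemma grp_mulK (T : topologicalType) (mul : T -> T -> T) inv e :
  is_topological_group mul inv e -> forall a b, mul a (mul (inv a) b) = b.
Proof. by move=> [A I V _ _] a b; rewrite A (proj2 (V _)) (proj1 (I _)). Qed.


Lemma base_from_good (T : topologicalType) (mul : T -> T -> T) inv e (K : Type)
  (A : set T) : is_topological_group mul inv e -> left_precompact mul e A ->
  ~ finite_set [set: K] -> forall S : set (set T), S `<=` open_nbhds_of e ->
  S #<= [set: K] ->
  (forall W, open_nbhds_of e W -> exists2 V, S V & delta mul inv A V `<=` W) ->
  weight_le A K.
Proof.
move=> G PC infK S SN SK good.
have [k0 _] := infinite_setN0 infK.
have [FV FVP] : {FV : set T -> set T & forall V, nbhs e V ->
   [/\ finite_set (FV V), FV V `<=` A &
      A `<=` [set mul f u | f in FV V & u in V]]}.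
  apply: (@choice _ _ (fun V F => nbhs e V -> [/\ finite_set F, F `<=` A &
      A `<=` [set mul f u | f in F & u in V]])) => V.
  have [Ve|NVe] := pselect (nbhs e V); last by exists set0.
  by have [F FP] := PC V Ve; exists F.
have SV : forall V, S V -> nbhs e V.
  by move=> V /SN [oV Ve]; apply: open_nbhs_nbhs; split.
pose Pd := [set p : set T * T | S p.1 /\ FV p.1 p.2].
pose B := (fun p : set T * T => A `&` (mul p.2 @` p.1)) @` Pd.
exists B; last first.
  apply: (card_le_trans (card_image_le _ _)).
  apply: (card_le_trans _ (inf_prod infK)).
  have [sig [sigS siginj]] := card_le_fun k0 SK.
  have [io ioP] : {io : set T -> T -> nat & forall V, finite_set (FV V) ->
      forall x y, FV V x -> FV V y -> io V x = io V y -> x = y}.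
    apply: (@choice _ _ (fun V (f : T -> nat) => finite_set (FV V) ->
      forall x y, FV V x -> FV V y -> f x = f y -> x = y)) => V.
    have [[n Fn]|NF] := pselect (finite_set (FV V)); last by exists (fun _ => 0%N).
    have [f [_ finj]] := card_le_fun 0%N (proj1 (proj1 (card_eqPle _ _) Fn)).
    by exists f.
  apply: (@card_le_inj _ _ _ _ (fun p => (sig p.1, io p.1 p.2))) => //.
  move=> [V f] [V' f'] [/= SV1 F1] [/= SV2 F2] [E1 E2].
  have E : V = V' by exact: siginj SV1 SV2 E1.
  subst V'; congr (_, _); apply: (ioP V) => //.
  by have [] := FVP V (SV V SV1).
split.
  move=> _ [[V f] [/= SVV _] <-]; exists (mul f @` V) => //.
  by apply: (grp_coset_open G); have [] := SN V SVV.
move=> U x oU Ax Ux.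
have oW : open_nbhds_of e [set z | U (mul x z)].
  split; first exact: (grp_ltrans_open G).
  by have [_ Id _ _ _] := G; rewrite /= (proj2 (Id x)).
have [V SVV dVW] := good _ oW.
have [_ FA AF] := FVP V (SV V SVV).
have [f Ff [u Vu xE]] := AF x Ax.
exists (A `&` (mul f @` V)); first by exists (V, f).
split; first by split => //; exists u.
move=> y [Ay [u' Vu' yE]].
have : delta mul inv A V (mul (inv x) y).
  exists x, y; split => //; exists f, u, u'; split => //; first exact: FA.
move=> /dVW /=; by rewrite (grp_mulK G).
Qed.


Lemma no_free_seq (T : topologicalType) (mul : T -> T -> T) inv e (A : set T)
  (lt : set T -> set T -> Prop) (S : set (set T)) (W : set T) :
  is_topological_group mul inv e -> left_precompact mul e A ->
  (forall x y, x <> y -> lt x y \/ lt y x) ->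
  (forall V U, S V -> S U -> lt V U -> ~ (delta mul inv A V `<=` Phi mul inv U)) ->
  open_nbhds_of e W -> (forall U, S U -> W `<=` U) -> S #= [set: nat] -> False.
Proof.
move=> G PC tot free [oW We] WS Snat.
have Wn : nbhs e W by apply: open_nbhs_nbhs; split.
have [W' [W'e W'W]] := grp_invmul_nbhs G Wn.
have [F [[n Fn] FA AF]] := PC W' W'e.
have [idx [idxF idxinj]] := card_le_fun 0%N (proj1 (proj1 (card_eqPle _ _) Fn)).
pose p x := xget e [set f | F f /\ exists2 w, W' w & mul f w = x].
have pP : forall x, A x -> F (p x) /\ exists2 w, W' w & mul (p x) w = x.
  move=> x Ax; apply: (@xgetPex _ e [set f | F f /\ exists2 w, W' w & mul f w = x]); have [f Ff [w W'w E]] := AF x Ax.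
  by exists f; split => //; exists w.
pose c x := idx (p x).
have cn : forall x, A x -> (c x < n)%N.
  by move=> x Ax; have := idxF _ (pP x Ax).1.
have same : forall x x', A x -> A x' -> c x = c x' -> W (mul (inv x) x').
  move=> x x' Ax Ax' E.
  have [Fp [w1 W1 E1]] := pP x Ax; have [Fp' [w2 W2 E2]] := pP x' Ax'.
  have pE : p x = p x' by exact: idxinj.
  by rewrite -E1 -E2 pE (grp_invmulK G); exact: W'W.
pose P V U (xy : T * T) := [/\ A xy.1, A xy.2, pairV mul A V xy.1 xy.2 &
  ~ Phi mul inv U (mul (inv xy.1) xy.2)].
pose wit V U := xget (e, e) (P V U).
have witP : forall V U, S V -> S U -> lt V U -> P V U (wit V U).
  move=> V U SV SU lVU; apply: (@xgetPex _ (e, e) (P V U)).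
  have /existsNP [z /not_implyP [[x [y [Ax Ay pxy ->]]] NPhi]] := free V U SV SU lVU.
  by exists (x, y).
pose col V U := (c (wit V U).1, c (wit V U).2).
pose In U := [set q | exists V, [/\ S V, lt V U & col V U = q]].
have key : forall U1 U2, S U1 -> S U2 -> lt U1 U2 -> ~ In U1 (col U1 U2).
  move=> U1 U2 S1 S2 l12 [V [SV lV1 cE]].
  move: (witP V U1 SV S1 lV1) (witP U1 U2 S1 S2 l12) cE; rewrite /col.
  case: (wit V U1) => x y; case: (wit U1 U2) => x' y'.
  move=> [/= Ax Ay _ NPhi] [/= Ax' Ay' [f' [u2 [u3 [_ Hu2 Hu3 Ex' Ey']]]] _] /= [cx cy].
  apply: NPhi; exists (mul (inv x) x'), u2, u3, (mul (inv y') y); split.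
  - by apply: (WS U1 S1); exact: same Ax Ax' cx.
  - by [].
  - by [].
  - by apply: (WS U1 S1); exact: same Ay' Ay (esym cy).
  have [As _ _ _ _] := G.
  have e1 : mul (mul (inv x) x') (mul (inv x') y') = mul (inv x) y'.
    by rewrite -As (grp_mulK G).
  have e2 : mul (mul (inv x) y') (mul (inv y') y) = mul (inv x) y.
    by rewrite -As (grp_mulK G).
  by rewrite -(grp_invmulK G f' u2 u3) -Ex' -Ey' e1 e2.
have Inn : forall U q, S U -> In U q -> (q.1 < n)%N /\ (q.2 < n)%N.
  move=> U q SU [V [SV lVU <-]]; have [/= Ax Ay _ _] := witP V U SV SU lVU.
  by split; exact: cn.
have Ininj : forall U1 U2, S U1 -> S U2 -> In U1 = In U2 -> U1 = U2.
  move=> U1 U2 S1 S2 E; apply: contrapT => U12.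
  have [l12|l21] := tot _ _ U12.
    by apply: (key U1 U2 S1 S2 l12); rewrite E; exists U1.
  by apply: (key U2 U1 S2 S1 l21); rewrite -E; exists U2.
pose enc U := [set ij : 'I_n * 'I_n | `[< In U (val ij.1, val ij.2) >]]%SET.
have : finite_set S.
  apply: (@card_le_finite _ _ _ [set: {set 'I_n * 'I_n}]) => //.
  apply: (@card_le_inj _ _ _ _ enc) => // U1 U2 S1 S2 E.
  apply: Ininj => //; apply/seteqP; split => -[i j] Iij.
    have [/= i_n j_n] := Inn _ _ S1 Iij.
    have : (Ordinal i_n, Ordinal j_n) \in enc U1 by rewrite inE; apply/asboolP.
    by rewrite E inE => /asboolP.
  have [/= i_n j_n] := Inn _ _ S2 Iij.
  have : (Ordinal i_n, Ordinal j_n) \in enc U2 by rewrite inE; apply/asboolP.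
  by rewrite -E inE => /asboolP.
by rewrite (eq_finite_set Snat); exact: infinite_nat.
Qed.


Lemma infinite_case (T : topologicalType) (mul : T -> T -> T) (inv : T -> T)
    (e : T) (K : Type) (A : set T) :
  is_topological_group mul inv e ->
  left_precompact mul e A ->
  nbhd_calibre_succ_omega e K -> ~ finite_set [set: K] ->
  weight_le A K.
Proof.
move=> G PC calib infK.
have [lt [wf tot]] := exists_wo (set T).
pose blk V U := delta mul inv A V `<=` Phi mul inv U.
have [Sg SgE] := @wf_rec _ _ lt wf True
  (fun U (h : set T -> Prop) => open_nbhds_of e U /\ forall V, lt V U -> h V -> ~ blk V U)
  (fun i h1 h2 h12 => propext (conj
     (fun '(conj a b) => conj a (fun V l hV => b V l (eq_ind _ id hV _ (esym (h12 V l)))))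
     (fun '(conj a b) => conj a (fun V l hV => b V l (eq_ind _ id hV _ (h12 V l)))))).
have SgN : Sg `<=` open_nbhds_of e by move=> U; rewrite SgE => -[].
have Sgfree : forall V U, Sg V -> Sg U -> lt V U -> ~ blk V U.
  by move=> V U SV; rewrite SgE => -[_ H] l; exact: H.
have good : forall W, open_nbhds_of e W -> exists2 V, Sg V & delta mul inv A V `<=` W.
  move=> W [oW We].
  have [U [NU PhiW]] := grp_Phi_nbhs G (open_nbhs_nbhs (conj oW We)).
  have [SU|NSU] := pselect (Sg U).
    exists U => //; apply: subset_trans PhiW; apply: (delta_Phi G); exact: NU.2.
  move: NSU; rewrite SgE => /not_andP[//|/existsNP[V /not_implyP[lVU /not_implyP[SV /contrapT bVU]]]].
  by exists V => //; exact: subset_trans PhiW.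
have [SK|NSK] := pselect (Sg #<= [set: K]).
  exact: (base_from_good G PC infK SgN SK good).
have [S0 S0Sg S0succ] := succ_sub NSK.
have [S' [S'S0 S'nat] [W NW WS]] := calib S0 (subset_trans S0Sg SgN) S0succ.
exfalso; apply: (no_free_seq G PC tot _ NW WS S'nat).
move=> V U SV SU; apply: Sgfree; exact: S0Sg (S'S0 _ _).
Qed.


From mathcomp Require Import finmap.

Lemma finite_Ne (T : topologicalType) (e : T) (K : Type) :
  nbhd_calibre_succ_omega e K -> finite_set [set: K] ->
  open_nbhds_of e #<= [set: K].
Proof.
move=> calib [m Km]; apply: contrapT => NY.
have [S0 S0N S0succ] := succ_sub NY.
have [S' [S'S0 S'nat] _] := calib S0 S0N S0succ.
suff : finite_set S0.
  move=> /(sub_finite_set S'S0); rewrite (eq_finite_set S'nat); exact: infinite_nat.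
apply: contrapT => NS0.
have [phi [phiS phiinj]] := card_le_fun set0 (proj1 (infiniteP _) NS0).
pose S1 := phi @` `I_m.+1.
have S1S0 : S1 `<=` S0 by move=> _ [i _ <-]; exact: phiS.
have S1fin : finite_set S1 by apply: finite_image; exact: finite_II.
have S1eq : S1 #= `I_m.+1 by apply: inj_card_eq => x y _ _; exact: phiinj.
have NS1 : ~ (S1 #<= [set: K]).
  move=> S1K; have : `I_m.+1 #<= `I_m.
    apply: (card_le_trans (proj2 (proj1 (card_eqPle _ _) S1eq))).
    exact: (card_le_trans S1K (proj1 (proj1 (card_eqPle _ _) Km))).
  by rewrite card_le_II ltnn.
have := S0succ.2 S1 S1S0 NS1.
by move=> /card_le_finite /(_ S1fin).
Qed.

Lemma min_open_nbhd (T : topologicalType) (e : T) :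
  finite_set (open_nbhds_of e) ->
  exists H : set T, [/\ open H, H e & forall U, open_nbhds_of e U -> H `<=` U].
Proof.
move=> finN.
pose D := fset_set (open_nbhds_of e).
have Fb : nbhs e (\bigcap_(i in [set` D]) id i).
  apply: filter_bigI => i; rewrite in_fset_set // => /set_mem [oi ie].
  by apply: open_nbhs_nbhs; split.
move: Fb; rewrite fset_setK //.
rewrite nbhsE => -[B [oB Be] BI].
by exists B; split => // U NU; apply: subset_trans BI _ => x /(_ U NU).
Qed.

Lemma finite_case (T : topologicalType) (mul : T -> T -> T) (inv : T -> T)
    (e : T) (K : Type) (A : set T) :
  is_topological_group mul inv e ->
  nbhd_calibre_succ_omega e K -> finite_set [set: K] ->
  weight_le A K.
Proof.
move=> G calib finK.
have NK := finite_Ne calib finK.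
have finN : finite_set (open_nbhds_of e) := card_le_finite NK finK.
have [H [oH He HU]] := min_open_nbhd finN.
have [As Id Iv Cm Ci] := G.
have Hmul : forall a b, H a -> H b -> H (mul a b).
  move=> a b Ha Hb.
  have N' : open_nbhds_of e [set z | H (mul a z)].
    by split; [exact: (grp_ltrans_open G a oH) | rewrite /= (proj2 (Id a))].
  exact: (HU _ N' b Hb).
have Hinv : forall a, H a -> H (inv a).
  move=> a Ha.
  have N' : open_nbhds_of e [set z | H (inv z)].
    split; last by rewrite /= (grp_inv_e G).
    by apply: (open_comp (f := inv)) => // z _; exact: Ci.
  exact: (HU _ N' a Ha).
have invK : forall a, inv (inv a) = a.
  by move=> a; apply: (grp_inv_uniq G); exact: (proj1 (Iv a)).
pose C y := [set z | H (mul (inv y) z)].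
have Cself : forall y, C y y by move=> y; rewrite /C /= (proj1 (Iv y)).
have Ctrans : forall y z w, C y z -> C z w -> C y w.
  move=> y z w Cyz Czw; have := Hmul _ _ Cyz Czw.
  by rewrite -As (grp_mulK G).
have Csym : forall y z, C y z -> C z y.
  by move=> y z /Hinv; rewrite /C /= (grp_inv_mul G) invK.
have Cclass : forall y z, C y z -> C z = C y.
  move=> y z Cyz; apply/seteqP; split => w.
    exact: Ctrans.
  by move=> Cyw; apply: Ctrans (Csym _ _ Cyz) Cyw.
have Copen : forall y, open (C y) by move=> y; exact: (grp_ltrans_open G (inv y) oH).
have Csub : forall x O, open O -> O x -> C x `<=` O.
  move=> x O oO Ox z Cz.
  have N' : open_nbhds_of e [set z | O (mul x z)].
    by split; [exact: (grp_ltrans_open G x oO) | rewrite /= (proj2 (Id x))].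
  by have := HU _ N' _ Cz; rewrite /= (grp_mulK G).
pose B := [set b | exists2 y, A y & b = A `&` C y].
exists B.
  split.
    by move=> _ [y Ay ->]; exists (C y).
  move=> O x oO Ax Ox; exists (A `&` C x); first by exists x.
  split; first by split.
  by move=> z [_ /(Csub x O oO Ox)].
apply: (card_le_trans _ NK).
pose phi b := if pselect (H (xget e b)) then setT else ~` C (xget e b).
have uP : forall b, B b -> exists2 y, A y & b = A `&` C y /\ C (xget e b) = C y.
  move=> _ [y Ay ->]; exists y => //; split => //.
  have [_ Cu] : (A `&` C y) (xget e (A `&` C y)) by apply: xgetI (conj Ay (Cself y)).
  exact: Cclass.
apply: (@card_le_inj _ _ _ _ phi).
  move=> b /uP [y Ay [bE CE]]; rewrite /phi; case: pselect => Hu.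
    by split; [exact: openT|].
  split.
    have -> : ~` C (xget e b) = \bigcup_(z in ~` C (xget e b)) C z.
      apply/seteqP; split => [z Nz|w [z Nz Czw] Cuw]; first by exists z => //.
      apply: Nz; have := Cclass _ _ Czw; rewrite (Cclass _ _ Cuw) => E.
      by rewrite E; exact: Cself.
    by apply: bigcup_open => z _; exact: Copen.
  move=> /Hinv; rewrite /= (proj2 (Id _)) invK; exact: Hu.
move=> b1 b2 Bb1 Bb2; have [y1 A1 [b1E C1]] := uP _ Bb1; have [y2 A2 [b2E C2]] := uP _ Bb2.
move=> E; suff CE : C (xget e b1) = C (xget e b2) by rewrite b1E b2E -C1 -C2 CE.
move: E; rewrite /phi; case: pselect => H1; case: pselect => H2 /=.
- move=> _; have Ce : forall u, H u -> C e u.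
    by move=> u Hu; rewrite /C /= (grp_inv_e G) (proj1 (Id _)).
  by rewrite (Cclass _ _ (Ce _ H1)) (Cclass _ _ (Ce _ H2)).
- move=> E; exfalso; have : (~` C (xget e b2)) (xget e b2) by rewrite -E.
  by apply; exact: Cself.
- move=> E; exfalso; have : (~` C (xget e b1)) (xget e b1) by rewrite E.
  by apply; exact: Cself.
- exact: setC_inj.
Qed.


Unset Implicit Arguments.

Theorem mainTheorem10 (T : topologicalType) (mul : T -> T -> T) (inv : T -> T)
    (e : T) (K : Type) (A : set T) :
  is_topological_group mul inv e ->
  left_precompact mul e A ->
  nbhd_calibre_succ_omega e K ->
  weight_le A K.
Proof.
move=> G PC calib.
have [finK|infK] := pselect (finite_set [set: K]).
  exact: (finite_case A G calib finK).
exact: (infinite_case G PC calib infK).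
Qed.
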